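(* Let $p$ be a prime and let $a,b$ be integers with $0<a,b<p$. If $\bigl(p-(a^{-1}b)_p\bigr)\bigl(p-(ab^{-1})_p\bigr)=2p+1$, then $S^G_{a,b}$ is generated by 5 invariants, i.e. $|\mathrm{inv}_{a,b}|=5$ (equivalently, $\operatorname{codim}\ker\varphi_{a,b}=3$).
   Context: Let $S=\mathbb{C}[x_1,x_2]$ with its standard grading, $\zeta=e^{2\pi i/p}$ and $G=\mathbb{Z}/p\mathbb{Z}=\langle\zeta\rangle$. For integers $a,b$, $G$ acts on $S$ by the $\mathbb{C}$-algebra automorphisms determined by $x_1\mapsto\zeta^a x_1$, $x_2\mapsto \zeta^b x_2$; $S^G_{a,b}$ denotes the ring of invariants, spanned by the invariant monomials $x_1^cx_2^d$, i.e. those with $ac+bd\equiv 0\pmod p$. $\mathrm{inv}_{a,b}$ denotes the minimal set of monomial generators of $S^G_{a,b}$ as a $\mathbb{C}$-algebra: the nonconstant invariant monomials that are not a product of two nonconstant invariant monomials. Writing $\mathrm{inv}_{a,b}=\{z_0,\dots,z_n\}$ in lexicographic order with $x_1>x_2$, let $R=\mathbb{C}[y_0,\dots,y_n]$ with $\deg y_i=\deg z_i$ and $\varphi_{a,b}:R\to S^G_{a,b}$ the $\mathbb{C}$-algebra map $y_i\mapsto z_i$. For an integer $c$, $c_p$ is the unique integer $0\le c_p<p$ congruent to $c$ mod $p$, and for $c$ not divisible by $p$, $c^{-1}$ is the unique integer $0<c^{-1}<p$ with $cc^{-1}\equiv1\pmod p$. *)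

(* Defs.v *)
From mathcomp Require Import all_boot.
Set Implicit Arguments. Unset Strict Implicit. Unset Printing Implicit Defensive.

(* Monomials x1^c x2^d are represented by their exponent pairs (c, d). *)

Definition resp (p c : nat) : nat := c %% p.

(* c^{-1}: the unique integer 0 < x < p with c * x = 1 mod p
   (for p prime and c not divisible by p; default 0 otherwise). *)
Definition modinv (p c : nat) : nat :=
  head 0 [seq x <- iota 1 p.-1 | (c * x) %% p == 1 %% p].

(* x1^c x2^d is invariant under x1 -> zeta^a x1, x2 -> zeta^b x2. *)
Definition invariant_mon (p a b : nat) (m : nat * nat) : Prop :=
  (a * m.1 + b * m.2) %% p = 0.

Definition nonconst (m : nat * nat) : Prop := m <> (0, 0).

(* m is a minimal generator of S^G_{a,b}: a nonconstant invariant monomial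
   that is not a product of two nonconstant invariant monomials. *)
Definition in_inv (p a b : nat) (m : nat * nat) : Prop :=
  nonconst m /\ invariant_mon p a b m /\
  ~ (exists m1 m2 : nat * nat,
        nonconst m1 /\ nonconst m2 /\ invariant_mon p a b m1 /\
        invariant_mon p a b m2 /\ m = (m1.1 + m2.1, m1.2 + m2.2)).

(* Main.v *)
From Stdlib Require Import ZArith Lia.
Require Import Defs.
From mathcomp Require Import all_boot zify.

Section ZL.
Open Scope Z_scope.
Lemma idI (P U V I J T : Z) : U * V = 2 * P + 1 -> 3 <= U < P -> 3 <= V < P -> 0 <= I -> 0 <= J -> U * J = I + P * T -> 2 * I = T + U * (2 * J - V * T).
Proof. intros HUV HU HV HI HJ HT; intros. nia. Qed.

Lemma A1 (P U V I J T : Z) : U * V = 2 * P + 1 -> 3 <= U < P -> 3 <= V < P -> 0 <= I -> 0 <= J -> U * J = I + P * T -> J = 0 -> I <= P -> I = 0 \/ I = P.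
Proof. intros HUV HU HV HI HJ HT; intros. subst. assert (I = - P * T) by nia.
  destruct (Z_le_gt_dec T (-2)); [nia|]. destruct (Z_le_gt_dec T 0); [|nia]. assert (T = 0 \/ T = -1) as [-> | ->] by lia; lia. Qed.

Lemma A2 (P U V I J T : Z) : U * V = 2 * P + 1 -> 3 <= U < P -> 3 <= V < P -> 0 <= I -> 0 <= J -> U * J = I + P * T -> J <= 1 -> I <= U -> (I = 0 /\ J = 0) \/ (I = U /\ J = 1).
Proof. intros HUV HU HV HI HJ HT; intros. assert (J = 0 \/ J = 1) as [->| ->] by lia;
  (destruct (Z_le_gt_dec T (-1)); [nia|]; destruct (Z_le_gt_dec T 0); [assert (T = 0) as -> by lia; lia|nia]). Qed.

Lemma A3 (P U V I J T : Z) : U * V = 2 * P + 1 -> 3 <= U < P -> 3 <= V < P -> 0 <= I -> 0 <= J -> U * J = I + P * T -> 2 * I <= U + 1 -> 2 * J <= V + 1 -> (I = 0 /\ J = 0) \/ (2 * I = U + 1 /\ 2 * J = V + 1).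
Proof. intros HUV HU HV HI HJ HT; intros. pose proof (@idI P U V I J T HUV HU HV HI HJ HT). set (S := 2 * J - V * T) in *.
  assert (2 * J = S + V * T) by (unfold S; lia).
  destruct (Z_le_gt_dec S 0); destruct (Z_le_gt_dec T 0).
  - assert (U * S <= 0) by nia. assert (S = 0) by nia. assert (T = 0) by nia. left; nia.
  -
    assert (T >= - U * S) by nia. assert (V * T >= - V * U * S) by nia.
    assert (S = 0) by nia. assert (T = 1) by nia. lia.
  - assert (U * S >= U) by nia. assert (U * S >= - U * V * T) by nia.
    assert (T = 0) by nia. assert (S = 1) by nia. lia.
  - assert (U * S >= U) by nia. assert (V * T >= V) by nia. right; nia. Qed.

Lemma B (P U V I J T : Z) : U * V = 2 * P + 1 -> 3 <= U < P -> 3 <= V < P -> 0 <= I -> 0 <= J -> U * J = I + P * T -> (I <> 0 \/ J <> 0) ->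
  (J = 0 /\ P <= I) \/ (I = 0 /\ P <= J) \/ (U <= I /\ 1 <= J) \/ (1 <= I /\ V <= J)
  \/ (U + 1 <= 2 * I /\ V + 1 <= 2 * J).
Proof. intros HUV HU HV HI HJ HT; intros. pose proof (@idI P U V I J T HUV HU HV HI HJ HT). set (S := 2 * J - V * T) in *.
  assert (2 * J = S + V * T) by (unfold S; lia).
  assert (V * I = J + P * S) by nia.
  destruct (Z.eq_dec J 0). { left. assert (I = - P * T) by nia.
    destruct (Z_le_gt_dec T (-1)); [nia|]. destruct (Z_le_gt_dec T 0); [assert (T = 0) by lia; nia|nia]. }
  destruct (Z.eq_dec I 0). { right; left. assert (J = - P * S) by nia.
    destruct (Z_le_gt_dec S (-1)); [nia|]. destruct (Z_le_gt_dec S 0); [assert (S = 0) by lia; nia|nia]. }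
  destruct (Z_le_gt_dec T 0). { right; right; left. nia. }
  destruct (Z_le_gt_dec S 0). { right; right; right; left. nia. }
  right; right; right; right. nia. Qed.
End ZL.
Arguments A1 {P U V I J T}. Arguments A2 {P U V I J T}. Arguments A3 {P U V I J T}. Arguments B {P U V I J T}. 
Set Implicit Arguments.

Lemma swapZ (P U V I J T : Z) : (U * V = 2 * P + 1)%Z -> (U * J = I + P * T)%Z ->
  (V * I = J + P * (2 * J - V * T))%Z.
Proof. intros H1 H2. assert (V * (U * J) = V * (I + P * T))%Z by now rewrite H2.
  assert (V * (U * J) = (U * V) * J)%Z by ring. rewrite H1 in H0. lia. Qed.

Arguments swapZ {P U V I J T}.

Lemma modinv_spec p a : prime p -> 0 < a < p ->
  0 < modinv p a < p /\ (a * modinv p a) %% p = 1.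
Proof.
move=> pp /andP[a0 ap].
have p1 : 1 < p by apply: prime_gt1.
have cop : coprime a p by rewrite coprime_sym prime_coprime // gtnNdvd.
case: (egcdnP p a0) => km kn E _.
move: cop; rewrite /coprime => /eqP g1; rewrite g1 in E.
set x := km %% p.
have ax : (a * x) %% p = 1.
  by rewrite /x modnMmr mulnC E modnMDl modn_small.
have xin : x \in [seq y <- iota 1 p.-1 | (a * y) %% p == 1 %% p].
  rewrite mem_filter ax (modn_small p1) eqxx /= mem_iota.
  have : x < p by rewrite /x ltn_mod; lia.
  case: (posnP x) => [x0|xp]; first by move: ax; rewrite x0 muln0 mod0n.
  lia.
rewrite /modinv.
case E2: [seq y <- iota 1 p.-1 | (a * y) %% p == 1 %% p] xin => [|y l] //= _.
have : y \in [seq y <- iota 1 p.-1 | (a * y) %% p == 1 %% p] by rewrite E2 mem_head.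
rewrite mem_filter mem_iota (modn_small p1) => /andP[/eqP -> H]; split=> //; lia.
Qed.

Lemma modz p x : 0 < p -> (x %% p = 0 <-> exists q : Z, Z.of_nat x = (Z.of_nat p * q)%Z).
Proof.
move=> p0; split.
- move=> H; exists (Z.of_nat (x %/ p)). rewrite {1}(divn_eq x p) H. lia.
- move=> [q Hq]. apply/eqP; rewrite -/(dvdn p x). apply/dvdnP. exists (Z.to_nat q).
  nia.
Qed.

Definition invZ (p u : nat) (m : nat * nat) :=
  exists t : Z, Z.of_nat (u * m.2) = (Z.of_nat m.1 + Z.of_nat p * t)%Z.

Lemma inv_iff p a b ai i j : 1 < p -> (a * ai) %% p = 1 ->
  (a * i + b * j) %% p = 0 <-> invZ p (p - (ai * b) %% p) (i, j).
Proof.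
move=> p1 Ha.
have p0 : 0 < p by lia.
have cp : (ai * b) %% p < p by rewrite ltn_mod.
have E0 := divn_eq (a * ai) p. rewrite Ha in E0.
have E1 := divn_eq (ai * b) p.
move: E0 E1 cp; set q0 := (a * ai) %/ p; set q1 := (ai * b) %/ p; set c := (ai * b) %% p.
move=> E0 E1 cp.
rewrite modz // /invZ /=; split.
- move=> [q Hq]. exists (Z.of_nat j - Z.of_nat ai * q + Z.of_nat q0 * Z.of_nat i + Z.of_nat q1 * Z.of_nat j)%Z.
  nia.
- move=> [t Ht]. exists (Z.of_nat a * Z.of_nat j - Z.of_nat q0 * Z.of_nat b * Z.of_nat j + Z.of_nat a * Z.of_nat q1 * Z.of_nat j - Z.of_nat a * t)%Z.
  nia.
Qed.

Lemma invZ_sub p u (g : nat * nat) i j : invZ p u g -> invZ p u (i, j) ->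
  g.1 <= i -> g.2 <= j -> invZ p u (i - g.1, j - g.2).
Proof.
case: g => g1 g2 [t1 H1] [t2 H2] /= L1 L2; exists (t2 - t1)%Z; simpl in *. nia.
Qed.

Lemma reduce p a b u (Hinv : forall m, invariant_mon p a b m <-> invZ p u m)
  (g : nat * nat) i j : invZ p u g -> nonconst g -> g.1 <= i -> g.2 <= j ->
  invZ p u (i, j) ->
  ~ (exists m1 m2 : nat * nat,
        nonconst m1 /\ nonconst m2 /\ invariant_mon p a b m1 /\
        invariant_mon p a b m2 /\ (i, j) = (m1.1 + m2.1, m1.2 + m2.2)) ->
  (i, j) = g.
Proof.
move=> Hg ng L1 L2 Hm irr.
case: (eqVneq (i, j) g) => // ne; exfalso; apply: irr.
exists g, (i - g.1, j - g.2); split => //; split.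
  move=> E; case: E => E1 E2; move: ne; case: g {Hg ng} L1 L2 E1 E2 => g1 g2 /= L1 L2 E1 E2.
  have -> : i = g1 by lia. have -> : j = g2 by lia. by rewrite eqxx.
split; first by apply/Hinv.
split; first by apply/Hinv; apply: invZ_sub.
by rewrite /= !subnKC.
Qed.

Theorem proposition1p3 (p a b : nat) :
  prime p -> 0 < a < p -> 0 < b < p ->
  (p - resp p (modinv p a * b)) * (p - resp p (a * modinv p b)) = 2 * p + 1 ->
  exists s : seq (nat * nat),
    uniq s /\ size s = 5 /\ (forall m, in_inv p a b m <-> m \in s).
Proof.
move=> pp Ha Hb.
have p1 : 1 < p by apply: prime_gt1.
have [_ Hai] := @modinv_spec p a pp Ha.
rewrite /resp.
set u := p - (modinv p a * b) %% p.
set v := p - (a * modinv p b) %% p.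
move=> Huv.
have Hinv : forall m, invariant_mon p a b m <-> invZ p u m.
  by case=> i j; rewrite /invariant_mon /=; apply: inv_iff.
have up : u <= p by rewrite /u leq_subr.
have vp : v <= p by rewrite /v leq_subr.
clearbody u v.
have u3 : 3 <= u.
  case: (leqP 3 u) => // h. have : u * v <= 2 * v by apply: leq_mul; lia. lia.
have v3 : 3 <= v.
  case: (leqP 3 v) => // h. have : u * v <= u * 2 by apply: leq_mul; lia. lia.
have u3' : u < p.
  case: (ltnP u p) => // h. have eu : u = p by lia. rewrite eu in Huv.
  have : p * v >= p * 3 by apply: leq_mul. lia.
have v3' : v < p.
  case: (ltnP v p) => // h. have ev : v = p by lia. rewrite ev in Huv.
  have : u * p >= 3 * p by apply: leq_mul. lia.
have uodd : odd u.
  move: (congr1 odd Huv); rewrite oddM oddD oddM /=. by case/andP.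
have vodd : odd v.
  move: (congr1 odd Huv); rewrite oddM oddD oddM /=. by case/andP.
have hu : 2 * (u.+1 %/ 2) = u.+1.
  by rewrite mulnC divnK // dvdn2 /= uodd.
have hv : 2 * (v.+1 %/ 2) = v.+1.
  by rewrite mulnC divnK // dvdn2 /= vodd.
set h := u.+1 %/ 2 in hu *; set k := v.+1 %/ 2 in hv *.
clearbody h k.
have HZ : (Z.of_nat u * Z.of_nat v = 2 * Z.of_nat p + 1)%Z by lia.
have HuZ : (3 <= Z.of_nat u < Z.of_nat p)%Z by lia.
have HvZ : (3 <= Z.of_nat v < Z.of_nat p)%Z by lia.
pose s := [:: (p, 0); (u, 1); (h, k); (1, v); (0, p)].
have Anat : forall (m1 g : nat * nat), g \in s -> invZ p u m1 -> m1.1 <= g.1 -> m1.2 <= g.2 ->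
    m1 = (0, 0) \/ m1 = g.
  case=> i j g; rewrite /s !inE => Hg [t Ht] /= Li Lj; simpl in Ht.
  have Ht' : (Z.of_nat u * Z.of_nat j = Z.of_nat i + Z.of_nat p * t)%Z by lia.
  have Hs := swapZ HZ Ht'.
  have Ii : (0 <= Z.of_nat i)%Z by lia.
  have Ij : (0 <= Z.of_nat j)%Z by lia.
  case/orP: Hg => [/eqP E|]; first (subst g; simpl in * ).
    have := A1 HZ HuZ HvZ Ii Ij Ht'; case; [lia|lia|move=> E|move=> E]; [left|right]; congr pair; lia.
  case/orP => [/eqP E|]; first (subst g; simpl in * ).
    have := A2 HZ HuZ HvZ Ii Ij Ht'; case; [lia|lia|move=> E|move=> E]; [left|right]; congr pair; lia.
  case/orP => [/eqP E|]; first (subst g; simpl in * ).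
    have := A3 HZ HuZ HvZ Ii Ij Ht'; case; [lia|lia|move=> E|move=> E]; [left|right]; congr pair; lia.
  have HZ' : (Z.of_nat v * Z.of_nat u = 2 * Z.of_nat p + 1)%Z by lia.
  case/orP => [/eqP E|]; first (subst g; simpl in * ).
    have := A2 HZ' HvZ HuZ Ij Ii Hs; case; [lia|lia|move=> E|move=> E]; [left|right]; congr pair; lia.
  move=> /eqP E; subst g; simpl in *.
  have := A1 HZ' HvZ HuZ Ij Ii Hs; case; [lia|lia|move=> E|move=> E]; [left|right]; congr pair; lia.
have Bnat : forall i j, invZ p u (i, j) -> (i, j) <> (0, 0) ->
    exists2 g, g \in s & g.1 <= i /\ g.2 <= j.
  move=> i j [t Ht] nz; simpl in Ht.
  have Ht' : (Z.of_nat u * Z.of_nat j = Z.of_nat i + Z.of_nat p * t)%Z by lia.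
  have Ii : (0 <= Z.of_nat i)%Z by lia.
  have Ij : (0 <= Z.of_nat j)%Z by lia.
  have nz' : (Z.of_nat i <> 0 \/ Z.of_nat j <> 0)%Z.
    case: (posnP i) => [i0|]; last lia. case: (posnP j) => [j0|]; last lia.
    by subst.
  have := B HZ HuZ HvZ Ii Ij Ht' nz'.
  case=> [E|[E|[E|[E|E]]]].
  - exists (p, 0); [by rewrite /s inE eqxx | simpl; lia].
  - exists (0, p); [by rewrite /s !inE eqxx !orbT | simpl; lia].
  - exists (u, 1); [by rewrite /s !inE eqxx !orbT | simpl; lia].
  - exists (1, v); [by rewrite /s !inE eqxx !orbT | simpl; lia].
  - exists (h, k); [by rewrite /s !inE eqxx !orbT | simpl; lia].
have ek : u * k = h + p.
  have e : u * (2 * k) = u * v + u by rewrite hv mulnS addnC.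
  rewrite mulnCA in e. lia.
have Cinv : forall g, g \in s -> invZ p u g /\ nonconst g.
  move=> g; rewrite /s !inE; rewrite /nonconst.
  case/orP => [/eqP ->|]; first by split; [exists (-1)%Z; cbn [fst snd]; lia | case; lia].
  case/orP => [/eqP ->|]; first by split; [exists 0%Z; cbn [fst snd]; lia | case; lia].
  case/orP => [/eqP ->|]; first by split; [exists 1%Z; cbn [fst snd]; lia | case; lia].
  case/orP => [/eqP ->|]; first by split; [exists 2%Z; cbn [fst snd]; lia | case; lia].
  move=> /eqP ->; by split; [exists (Z.of_nat u); cbn [fst snd]; lia | case; lia].
exists s; split.
  rewrite /= !inE !xpair_eqE /=. lia.
split; first by [].
case=> i j; split.
- move=> [nc [Hm irr]].
  have Hm' : invZ p u (i, j) by apply/Hinv.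
  have [g gs [L1 L2]] := Bnat i j Hm' nc.
  have [Hg ng] := Cinv g gs.
  by rewrite (reduce Hinv Hg ng L1 L2 Hm' irr).
- move=> ms. have [Hg ng] := Cinv _ ms.
  split => //; split; first by apply/Hinv.
  move=> [m1 [m2 [n1 [n2 [I1 [I2 E]]]]]].
  have L1 : m1.1 <= (i, j).1 by rewrite E /=; lia.
  have L2 : m1.2 <= (i, j).2 by rewrite E /=; lia.
  have I1' : invZ p u m1 by apply/Hinv.
  case: (Anat m1 (i, j) ms I1' L1 L2) => E1; first by apply: n1.
  apply: n2; move: E; rewrite E1; case: m2 {I2} => x y /= [E2 E3]. congr pair; lia.
Qed.
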